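(* For real $z\ge 10$ let $$c_1(z)=\sum_{\substack{n_1,n_2,n_3,n_4\le z\\ \sqrt{n_1}+\sqrt{n_2}+\sqrt{n_3}=\sqrt{n_4}}}\frac{d(n_1)d(n_2)d(n_3)d(n_4)}{(n_1n_2n_3)^{3/4}n_4^{1/4}},$$ the sum being over positive integers. Then $c_1(z)\ll 1$ uniformly for $z\ge 10$.
   Context: $d(n)$ denotes the number of positive divisors of $n$. $f\ll g$ means $|f|\le Cg$ for some absolute positive constant $C$. *)

(* Defs.v *)
From Stdlib Require Import Reals List Arith ZArith.
Import ListNotations.
Open Scope R_scope.

(* d(n): number of positive divisors of n (d 0 = 0, irrelevant here). *)
Definition ndiv (n : nat) : nat :=
  length (filter (fun k => Nat.eqb (n mod k) 0) (seq 1 n)).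

Definition rsum (l : list nat) (f : nat -> R) : R :=
  fold_right (fun n acc => f n + acc) 0 l.

Definition upto (z : R) : list nat :=
  filter (fun n => if Rle_dec (INR n) z then true else false)
         (seq 1 (Z.to_nat (up z))).

Definition c1_term (n1 n2 n3 n4 : nat) : R :=
  if Req_EM_T (sqrt (INR n1) + sqrt (INR n2) + sqrt (INR n3)) (sqrt (INR n4))
  then INR (ndiv n1 * ndiv n2 * ndiv n3 * ndiv n4) /
       (Rpower (INR (n1 * n2 * n3)) (3/4) * Rpower (INR n4) (1/4))
  else 0.

Definition c1sum (z : R) : R :=
  rsum (upto z) (fun n1 => rsum (upto z) (fun n2 =>
  rsum (upto z) (fun n3 => rsum (upto z) (fun n4 => c1_term n1 n2 n3 n4)))).

(* Main.v *)
Require Import Defs.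
From Stdlib Require Import Reals.
Open Scope R_scope.
From Stdlib Require Import Reals Arith Lia.
From mathcomp Require all_boot.
Module NT.
Import all_boot.
Local Open Scope nat_scope.

Lemma size_add_divisors f divs :
  size (PrimeDecompAux.add_divisors f divs) = f.2.+1 * size divs.
Proof.
case: f => p e /=; rewrite /PrimeDecompAux.add_divisors.
elim: e => [|e IH] /=; first by rewrite mul1n.
by rewrite size_merge size_cat size_map IH mulSn addnC.
Qed.

Lemma size_divisors n :
  size (divisors n) = \prod_(f <- prime_decomp n) f.2.+1.
Proof.
rewrite /divisors; elim: (prime_decomp n) => [|f pd IH] /=.
  by rewrite big_nil.
by rewrite size_add_divisors IH big_cons.
Qed.

Lemma fact_bound p e : prime p ->
  e.+1 ^ 8 <= (if p < 256 then 8 ^ 8 else 1) * p ^ e.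
Proof.
move=> pp.
have p2 : 2 <= p by apply: prime_gt1.
case: ifP => hp.
- have : e.+1 <= 8 * (e %/ 8).+1.
    have hr : e %% 8 < 8 by rewrite ltn_mod. have he := divn_eq e 8.
    move: hr he; set k := e %/ 8; set r := e %% 8 => /ltP hr he.
    apply/leP; rewrite /muln /addn /= in he *. lia.
  move=> h1.
  have h2 : (e %/ 8).+1 <= 2 ^ (e %/ 8) by apply: ltn_expl.
  have h3 : e.+1 ^ 8 <= (8 * 2 ^ (e %/ 8)) ^ 8.
    rewrite leq_exp2r //; apply: (leq_trans h1); by rewrite leq_mul2l.
  apply: (leq_trans h3); rewrite expnMn; apply: leq_mul; first exact: leqnn.
  rewrite -expnM; apply: (@leq_trans (2 ^ e)).
    by rewrite leq_pexp2l // leq_trunc_div.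
  case: (e) => [|e']; first by rewrite !expn0.
  by rewrite leq_exp2r.
- rewrite mul1n.
  have h1 : e.+1 <= 2 ^ e by apply: ltn_expl.
  have h3 : e.+1 ^ 8 <= (2 ^ e) ^ 8 by rewrite leq_exp2r.
  apply: (leq_trans h3); rewrite -expnM mulnC expnM.
  case: e {h1 h3} => [|e]; first by rewrite !expn0.
  by rewrite leq_exp2r // leqNgt hp.
Qed.

Lemma aux_bound (s : seq (nat * nat)) : all (fun f => prime f.1) s ->
  (\prod_(f <- s) f.2.+1) ^ 8 <=
  (8 ^ 8) ^ (count (fun f => f.1 < 256) s) * \prod_(f <- s) f.1 ^ f.2.
Proof.
elim: s => [|f s IH] /=; first by rewrite !big_nil.
case/andP => pf ps.
rewrite !big_cons expnMn.
have h1 := fact_bound f.1 f.2 pf.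
have h2 := IH ps.
move: h1 h2; move: (8 ^ 8) => c h1 h2.
rewrite expnD mulnA.
apply: (leq_trans (leq_mul h1 h2)).
case: ifP => hf; rewrite ?expn1 ?expn0 ?mul1n.
- by rewrite -!mulnA [X in c * X]mulnCA.
- by rewrite -!mulnA mulnCA.
Qed.

Definition KD := (8 ^ 8) ^ 256.

Lemma div_bound n : 0 < n -> size (divisors n) ^ 8 <= KD * n.
Proof.
move=> n0.
rewrite size_divisors [X in _ <= _ * X](prod_prime_decomp n0).
have hall : all (fun f => prime f.1) (prime_decomp n).
  apply/allP => [[p e]] /mem_prime_decomp [pp _ _] //.
apply: leq_trans; first exact: (aux_bound _ hall).
rewrite leq_mul2r; apply/orP; right.
rewrite /KD; apply: leq_pexp2l; first by rewrite expn_gt0.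
have -> : count (fun f => f.1 < 256) (prime_decomp n) =
          count (fun p => p < 256) (primes n).
  by rewrite /primes /unzip1 count_map.
rewrite -size_filter.
have -> : 256 = size (iota 0 256) by rewrite size_iota.
apply: uniq_leq_size; first by apply: filter_uniq; apply: primes_uniq.
by move=> x; rewrite mem_filter mem_iota => /andP [h _].
Qed.

Lemma modn_mod n k : 0 < k -> Nat.modulo n k = n %% k.
Proof.
move=> k0; symmetry; apply: (Nat.mod_unique n k (n %/ k)).
- by apply/leP; rewrite ltn_mod.
- rewrite {1}(divn_eq n k) mulnC; by [].
Qed.

Lemma modeq k n : 0 < n -> Nat.eqb (Nat.modulo n k) 0 = (k %| n).
Proof.
move=> n0; case: k => [|k].
- rewrite Nat.mod_0_r dvd0n; case: n n0 => //.
- rewrite modn_mod // /dvdn; case: (n %% k.+1) => //.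
Qed.

Lemma ndiv_size n : 0 < n -> ndiv n = size (divisors n).
Proof.
move=> n0.
have e1 : ndiv n = size [seq d <- iota 1 n | d %| n].
  rewrite /ndiv.
  have -> : List.seq 1 n = iota 1 n by [].
  elim: (iota 1 n) => [|k l IH] //=.
  rewrite (modeq k n n0); case: (k %| n) => //=.
  by rewrite IH.
rewrite e1; apply: perm_size; apply: uniq_perm.
- by apply: filter_uniq; apply: iota_uniq.
- exact: divisors_uniq.
move=> d; rewrite mem_filter mem_iota -dvdn_divisors //.
case hd: (d %| n) => //=.
by rewrite add1n ltnS (dvdn_gt0 n0 hd) (dvdn_leq n0 hd).
Qed.

Definition sqf s := forall p, logn p s <= 1.

Lemma sf_decomp x : 0 < x -> exists s t, [/\ x = s * (t * t), 0 < s, 0 < t & sqf s].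
Proof.
suff H : forall N x, x <= N -> 0 < x ->
  exists s t, [/\ x = s * (t * t), 0 < s, 0 < t & sqf s].
  by move=> x0; exact: (H x x).
clear x; elim => [|N IH] x hx x0.
  by move: hx x0; case: x.
case: (ltngtP x 1) => hx1.
- by rewrite ltnNge x0 in hx1.
- pose p := pdiv x.
  have pp : prime p by apply: pdiv_prime.
  have pd : p %| x by apply: pdiv_dvd.
  pose y := x %/ p.
  have hy : x = p * y by rewrite /y mulnC divnK.
  have p1 := prime_gt1 pp.
  have y0 : 0 < y by move: x0; rewrite hy muln_gt0 => /andP [].
  have yN : y <= N.
    rewrite -ltnS; apply: (leq_trans _ hx); rewrite hy.
    rewrite -{1}(mul1n y) ltn_mul2r y0 //.
  have [s [t [ey s0 t0 sq]]] := IH y yN y0.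
  case hps: (p %| s).
  + pose s' := s %/ p.
    have es : s = p * s' by rewrite /s' mulnC divnK.
    exists s', (p * t); split.
    * by rewrite hy ey es; rewrite -!multE; ring.
    * by move: s0; rewrite es muln_gt0 => /andP [].
    * by rewrite muln_gt0 t0 andbT; apply: prime_gt0.
    * move=> q; apply: (leq_trans _ (sq q)); apply: dvdn_leq_log => //.
      by rewrite es dvdn_mull.
  + exists (p * s), t; split.
    * by rewrite hy ey; rewrite -!multE; ring.
    * by rewrite muln_gt0 s0 andbT; apply: prime_gt0.
    * by [].
    * move=> q; rewrite lognM //; last by apply: prime_gt0.
      rewrite logn_prime //.
      case hq: (q == p).
      - move/eqP: hq => ->.
        rewrite logn_coprime // prime_coprime // hps //.
      - by rewrite add0n.
- exists x, 1; split => //; first by rewrite !muln1.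
  by move=> q; rewrite hx1 logn1.
Qed.

Lemma sf_eq s s' k m : 0 < s -> 0 < s' -> 0 < k -> sqf s -> sqf s' ->
  s * s' * (k * k) = m * m -> s = s'.
Proof.
move=> s0 s'0 k0 hs hs' e.
apply: eqn_from_log => // p.
have := congr1 (logn p) e.
have m0 : 0 < m.
  case: m e => // e; move: e; rewrite muln0 => /eqP.
  by rewrite !muln_eq0 => /orP [/orP [] | /orP []] /eqP h;
     [move: s0 | move: s'0 | move: k0 | move: k0]; rewrite h.
rewrite !lognM ?muln_gt0 ?s0 ?s'0 ?k0 ?m0 //.
have := hs p; have := hs' p.
move: (logn p s) (logn p s') (logn p k) (logn p m) => a b c d.
move=> /leP hb /leP ha he.
rewrite -?plusE in he. lia.
Qed.

Lemma common_part (a b c : nat) : (0 < a)%coq_nat -> (0 < b)%coq_nat -> (0 < c)%coq_nat ->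
  (exists q p, (0 < q)%coq_nat /\ Nat.mul (Nat.mul a b) (Nat.mul q q) = Nat.mul p p) ->
  (exists q p, (0 < q)%coq_nat /\ Nat.mul (Nat.mul a c) (Nat.mul q q) = Nat.mul p p) ->
  exists s m1 m2 m3, a = Nat.mul s (Nat.mul m1 m1) /\ b = Nat.mul s (Nat.mul m2 m2) /\ c = Nat.mul s (Nat.mul m3 m3) /\
    (0 < s)%coq_nat /\ (0 < m1)%coq_nat /\ (0 < m2)%coq_nat /\ (0 < m3)%coq_nat.
Proof.
move=> /ltP a0 /ltP b0 /ltP c0 [q [p [/ltP q0 e1]]] [q' [p' [/ltP q'0 e2]]].
move: e1 e2; rewrite !multE => e1 e2.
have [sa [ta [ea sa0 ta0 hsa]]] := sf_decomp _ a0.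
have [sb [tb [eb sb0 tb0 hsb]]] := sf_decomp _ b0.
have [sc [tc [ec sc0 tc0 hsc]]] := sf_decomp _ c0.
have h1 : sa = sb.
  apply: (@sf_eq sa sb (ta * tb * q) p) => //.
    by rewrite !muln_gt0 ta0 tb0 q0.
  by rewrite -e1 ea eb -!multE; ring.
have h2 : sa = sc.
  apply: (@sf_eq sa sc (ta * tc * q') p') => //.
    by rewrite !muln_gt0 ta0 tc0 q'0.
  by rewrite -e2 ea ec -!multE; ring.
exists sa, ta, tb, tc; rewrite -h1 -h2 in eb ec.
by do ! split => //; apply/ltP.
Qed.

Lemma ndiv_bound n : (0 < n)%coq_nat ->
  (ndiv n * ndiv n * ndiv n * ndiv n * ndiv n * ndiv n * ndiv n * ndiv n <= KD * n)%coq_nat.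
Proof.
move=> /ltP n0; apply/leP.
have := div_bound _ n0; rewrite -ndiv_size //.
by rewrite !expnS expn0 muln1 !mulnA.
Qed.

Lemma KD_pos : (0 < KD)%coq_nat.
Proof. by apply/ltP; rewrite /KD !expn_gt0. Qed.

Lemma ndiv_bound_ex : exists K : nat, (0 < K)%coq_nat /\ forall n, (0 < n)%coq_nat ->
  (Nat.mul (Nat.mul (Nat.mul (Nat.mul (Nat.mul (Nat.mul (Nat.mul (ndiv n) (ndiv n)) (ndiv n)) (ndiv n)) (ndiv n)) (ndiv n)) (ndiv n)) (ndiv n) <= Nat.mul K n)%coq_nat.
Proof.
have h1 := KD_pos. have h2 := ndiv_bound.
generalize dependent KD => K h1 h2.
exists K; split; first exact: h1.
move=> n hn; exact: h2 n hn.
Qed.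
End NT.

From Stdlib Require Import Reals Lra Lia Psatz ZArith List Classical.
Import ListNotations.
Open Scope R_scope.

Definition gsum {A} (l : list A) (f : A -> R) : R :=
  fold_right (fun x acc => f x + acc) 0 l.

Lemma gsum_app {A} (l1 l2 : list A) f : gsum (l1 ++ l2) f = gsum l1 f + gsum l2 f.
Proof. induction l1; simpl; [ring | rewrite IHl1; ring]. Qed.

Lemma gsum_map {A B} (g : A -> B) l f : gsum (map g l) f = gsum l (fun x => f (g x)).
Proof. induction l; simpl; [ring | rewrite IHl; ring]. Qed.

Lemma gsum_ext {A} (l : list A) f g : (forall x, In x l -> f x = g x) -> gsum l f = gsum l g.
Proof.
  induction l; simpl; intros H; [ring|].
  rewrite H by auto; rewrite IHl by auto; ring.
Qed.

Lemma gsum_nonneg {A} (l : list A) f : (forall x, In x l -> 0 <= f x) -> 0 <= gsum l f.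
Proof.
  induction l; simpl; intros H; [lra|].
  assert (0 <= f a) by auto. assert (0 <= gsum l f) by auto. lra.
Qed.

Lemma gsum_scal {A} (l : list A) f c : gsum l (fun x => c * f x) = c * gsum l f.
Proof. induction l; simpl; [ring | rewrite IHl; ring]. Qed.

Lemma gsum_prod {A B} (l : list A) (l' : list B) (F : A -> B -> R) :
  gsum l (fun a => gsum l' (fun b => F a b)) =
  gsum (list_prod l l') (fun p => F (fst p) (snd p)).
Proof.
  induction l; simpl; [reflexivity|].
  rewrite gsum_app, gsum_map, IHl; reflexivity.
Qed.

Lemma gsum_mult {A B} (l : list A) (l' : list B) f g :
  gsum (list_prod l l') (fun p => f (fst p) * g (snd p)) = gsum l f * gsum l' g.
Proof.
  rewrite <- (gsum_prod l l' (fun a b => f a * g b)).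
  rewrite (gsum_ext l (fun a => gsum l' (fun b => f a * g b)) (fun a => gsum l' g * f a)).
  - rewrite gsum_scal; ring.
  - intros x _; rewrite gsum_scal; ring.
Qed.

Lemma NoDup_prod {A B} (l : list A) (l' : list B) :
  NoDup l -> NoDup l' -> NoDup (list_prod l l').
Proof.
  intros H1 H2; induction H1 as [|a l Ha Hl IH]; simpl; [constructor|].
  apply NoDup_app; [ | exact IH | ].
  - clear -H2. induction H2; simpl; constructor; auto.
    intros Hin; apply in_map_iff in Hin; destruct Hin as [y [Hy Hy']].
    inversion Hy; subst; auto.
  - intros [x y] Hx Hy. apply in_map_iff in Hx; destruct Hx as [y' [Hy1 _]].
    inversion Hy1; subst. apply in_prod_iff in Hy. tauto.
Qed.

Section Inj.
Context {A B : Type} (eqB : forall x y : B, {x = y} + {x <> y}).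

Lemma gsum_remove (b : B) l g : NoDup l -> In b l ->
  gsum l g = g b + gsum (remove eqB b l) g.
Proof.
  induction l as [|c l IH]; simpl; intros Hn Hin; [contradiction|].
  inversion Hn; subst.
  destruct (eqB b c) as [e|e].
  - subst. rewrite notin_remove by auto. reflexivity.
  - destruct Hin as [Hin|Hin]; [congruence|].
    simpl. rewrite IH by auto. ring.
Qed.

Lemma NoDup_remove' (b : B) l : NoDup l -> NoDup (remove eqB b l).
Proof.
  induction 1 as [|c l Hc Hl IH]; simpl; [constructor|].
  destruct (eqB b c); auto. constructor; auto.
  intros Hin; apply in_remove in Hin; tauto.
Qed.

Lemma inj_sum (l1 : list A) : forall (l2 : list B) (F : A -> R) (g : B -> R) (Rel : A -> B -> Prop),
  NoDup l1 -> NoDup l2 -> (forall b, 0 <= g b) ->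
  (forall a, In a l1 -> F a <= 0 \/ exists b, In b l2 /\ Rel a b /\ F a <= g b) ->
  (forall a a' b, In a l1 -> In a' l1 -> Rel a b -> Rel a' b -> a = a') ->
  gsum l1 F <= gsum l2 g.
Proof.
  induction l1 as [|a l1 IH]; simpl; intros l2 F g Rel Hn1 Hn2 Hg HF Hinj.
  - apply gsum_nonneg; auto.
  - inversion Hn1; subst.
    destruct (HF a (or_introl eq_refl)) as [Ha | [b [Hb [Rab Hab]]]].
    + assert (gsum l1 F <= gsum l2 g).
      { apply (IH l2 F g Rel); [auto|auto|auto| |].
        - intros a' Ha'; apply HF; right; auto.
        - intros a1 a2 b Ha1 Ha2 R1 R2; apply (Hinj a1 a2 b); auto. }
      lra.
    + rewrite (gsum_remove b l2 g Hn2 Hb).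
      assert (gsum l1 F <= gsum (remove eqB b l2) g).
      { apply (IH _ F g Rel).
        - auto.
        - apply NoDup_remove'; auto.
        - auto.
        - intros a' Ha'. destruct (HF a' (or_intror Ha')) as [H|[b' [Hb' [R' H']]]]; [left; auto|].
          right. exists b'; split; auto.
          apply in_in_remove; auto.
          intros ->. assert (a' = a) by (apply (Hinj a' a b); auto).
          subst; contradiction.
        - intros a1 a2 b0 Ha1 Ha2 R1 R2; apply (Hinj a1 a2 b0); auto. }
      lra.
Qed.
End Inj.

Definition hh (x : nat) : R := / Rpower (INR x) (5/4).

Lemma Rpower_pos x y : 0 < Rpower x y.
Proof. unfold Rpower; apply exp_pos. Qed.

Lemma hh_pos x : 0 <= hh x.
Proof. unfold hh; left; apply Rinv_0_lt_compat, Rpower_pos. Qed.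

Lemma Rpower_1_base y : Rpower 1 y = 1.
Proof. unfold Rpower; rewrite ln_1, Rmult_0_r, exp_0; reflexivity. Qed.

Lemma tele_step (x : R) : 1 <= x ->
  / Rpower (x + 1) (5/4) <= 4 / Rpower x (1/4) - 4 / Rpower (x + 1) (1/4).
Proof.
  intros Hx.
  set (s := Rpower x (1/4)). set (r := Rpower (x+1) (1/4)).
  assert (s0 : 0 < s) by apply Rpower_pos.
  assert (r0 : 0 < r) by apply Rpower_pos.
  assert (Es : s ^ 4 = x).
  { unfold s; rewrite <- Rpower_pow by apply Rpower_pos.
    rewrite Rpower_mult. replace (1/4 * INR 4) with 1 by (simpl; field).
    apply Rpower_1; lra. }
  assert (Er : r ^ 4 = x + 1).
  { unfold r; rewrite <- Rpower_pow by apply Rpower_pos.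
    rewrite Rpower_mult. replace (1/4 * INR 4) with 1 by (simpl; field).
    apply Rpower_1; lra. }
  assert (E5 : Rpower (x + 1) (5/4) = r ^ 4 * r).
  { rewrite Er. replace (5/4) with (1 + 1/4) by field.
    rewrite Rpower_plus, Rpower_1 by lra. reflexivity. }
  rewrite E5.
  assert (Hsr : s < r).
  { destruct (Rlt_or_le s r) as [h|h]; auto.
    assert (r ^ 4 <= s ^ 4) by (apply pow_incr; lra). lra. }
  assert (Hk : 1 = (r - s) * (r^3 + r^2*s + r*s^2 + s^3)).
  { transitivity (r^4 - s^4); [lra | ring]. }
  assert (Hb : r^3 + r^2*s + r*s^2 + s^3 <= 4 * r^3).
  { assert (s^2 <= r^2) by (apply pow_incr; lra).
    assert (s^3 <= r^3) by (apply pow_incr; lra).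
    assert (r^2 * s <= r^2 * r) by (apply Rmult_le_compat_l; nra).
    assert (r * s^2 <= r * r^2) by (apply Rmult_le_compat_l; lra).
    assert (r^3 = r^2 * r) by ring. assert (r^3 = r * r^2) by ring. lra. }
  assert (H1 : 1 <= (r - s) * (4 * r^3)).
  { rewrite Hk at 1. apply Rmult_le_compat_l; lra. }
  assert (H2 : s <= 4 * (r - s) * r^4).
  { assert (r <= r * ((r - s) * (4 * r^3))) by (rewrite <- (Rmult_1_r r) at 1; apply Rmult_le_compat_l; lra).
    replace (4 * (r - s) * r^4) with (r * ((r - s) * (4 * r^3))) by ring. lra. }
  assert (E1 : / (r^4 * r) = s / (r^5 * s)) by (field; lra).
  assert (E2 : 4 / s - 4 / r = (4 * (r - s) * r^4) / (r^5 * s)) by (field; lra).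
  rewrite E1, E2. unfold Rdiv. apply Rmult_le_compat_r; [|lra].
  left; apply Rinv_0_lt_compat. apply Rmult_lt_0_compat; [apply pow_lt|]; lra.
Qed.

Lemma hsum_aux N : gsum (seq 1 (S N)) hh <= 5 - 4 / Rpower (INR (S N)) (1/4).
Proof.
  induction N.
  - simpl. unfold hh. rewrite !Rpower_1_base. lra.
  - rewrite seq_S, gsum_app.
    change (gsum [(1 + S N)%nat] hh) with (hh (1 + S N)%nat + 0).
    replace (1 + S N)%nat with (S (S N)) by lia.
    assert (H := tele_step (INR (S N))).
    rewrite <- S_INR in H.
    assert (1 <= INR (S N)) by (rewrite S_INR; pose proof (pos_INR N); lra).
    specialize (H H0). unfold hh in *. lra.
Qed.

Lemma hsum N : gsum (seq 1 N) hh <= 5.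
Proof.
  destruct N; [simpl; lra|].
  pose proof (hsum_aux N).
  assert (0 < 4 / Rpower (INR (S N)) (1 / 4)) by (apply Rdiv_lt_0_compat; [lra | apply Rpower_pos]).
  lra.
Qed.

Lemma ln_le_aux x y : 0 < x -> x <= y -> ln x <= ln y.
Proof. intros Hx [H|H]; [left; apply ln_increasing; auto | subst; lra]. Qed.

Lemma exp_le_aux x y : x <= y -> exp x <= exp y.
Proof. intros [H|H]; [left; apply exp_increasing; auto | subst; lra]. Qed.

Lemma ln_nat_nonneg n : (0 < n)%nat -> 0 <= ln (INR n).
Proof.
  intros H. rewrite <- ln_1. apply ln_le_aux; [lra|].
  apply (le_INR 1 n); lia.
Qed.

Lemma INR_pos n : (0 < n)%nat -> 0 < INR n.
Proof. intros; apply lt_0_INR; lia. Qed.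

Lemma ln_mult_nat a b : (0 < a)%nat -> (0 < b)%nat ->
  ln (INR (a * b)) = ln (INR a) + ln (INR b).
Proof. intros; rewrite mult_INR; apply ln_mult; apply INR_pos; auto. Qed.

Lemma key_sq (X Y : nat) (k : Z) : (0 < X)%nat ->
  2 * sqrt (INR X) + 2 * sqrt (INR Y) = IZR k ->
  exists q p : nat, (0 < q)%nat /\ (X * (q * q) = p * p)%nat.
Proof.
  intros HX E.
  set (u := sqrt (INR X)) in *. set (v := sqrt (INR Y)) in *.
  assert (u0 : 0 < u) by (apply sqrt_lt_R0; apply INR_pos; auto).
  assert (v0 : 0 <= v) by apply sqrt_pos.
  assert (Hu : u * u = INR X) by (apply sqrt_sqrt; apply pos_INR).
  assert (Hv : v * v = INR Y) by (apply sqrt_sqrt; apply pos_INR).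
  assert (kpos : (0 < k)%Z) by (apply lt_IZR; lra).
  set (T := (k * k + 4 * Z.of_nat X - 4 * Z.of_nat Y)%Z).
  assert (ET : IZR T = 4 * IZR k * u).
  { unfold T. rewrite minus_IZR, plus_IZR, !mult_IZR, <- !INR_IZR_INZ.
    rewrite <- Hu, <- Hv. assert (Ev : v = (IZR k - 2 * u) / 2) by lra.
    rewrite Ev. field. }
  assert (Tpos : (0 <= T)%Z).
  { apply le_IZR. rewrite ET. assert (0 < IZR k) by (apply IZR_lt; auto). nra. }
  exists (Z.to_nat (4 * k)), (Z.to_nat T). split; [lia|].
  apply Nat2Z.inj. rewrite !Nat2Z.inj_mul, !Z2Nat.id by lia.
  apply eq_IZR. rewrite !mult_IZR, <- INR_IZR_INZ, ET, <- Hu. ring.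
Qed.

Lemma pair_sq (a b c d : nat) : (0 < a)%nat -> (0 < b)%nat ->
  sqrt (INR a) + sqrt (INR b) + sqrt (INR c) = sqrt (INR d) ->
  exists q p : nat, (0 < q)%nat /\ (a * b * (q * q) = p * p)%nat.
Proof.
  intros Ha Hb E.
  apply (key_sq (a * b) (c * d) (Z.of_nat d + Z.of_nat c - Z.of_nat a - Z.of_nat b)%Z).
  - lia.
  - rewrite !mult_INR, !sqrt_mult by apply pos_INR.
    rewrite !minus_IZR, !plus_IZR, <- !INR_IZR_INZ.
    assert (Ea := sqrt_sqrt (INR a) (pos_INR a)).
    assert (Eb := sqrt_sqrt (INR b) (pos_INR b)).
    assert (Ec := sqrt_sqrt (INR c) (pos_INR c)).
    assert (Ed := sqrt_sqrt (INR d) (pos_INR d)).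
    set (A := sqrt (INR a)) in *. set (B := sqrt (INR b)) in *.
    set (C := sqrt (INR c)) in *. set (D := sqrt (INR d)) in *.
    rewrite <- Ea, <- Eb, <- Ec, <- Ed, <- E. ring.
Qed.

Section WithK.
Context (KD : nat) (KD_pos : (0 < KD)%nat) (KD_bound : forall n, (0 < n)%nat ->
  (ndiv n * ndiv n * ndiv n * ndiv n * ndiv n * ndiv n * ndiv n * ndiv n <= KD * n)%nat).

Lemma ndiv_ln n : (0 < n)%nat -> (0 < ndiv n)%nat ->
  ln (INR (ndiv n)) <= / 8 * (ln (INR KD) + ln (INR n)).
Proof.
  intros Hn Hd.
  pose proof (KD_bound n Hn) as H.
  apply le_INR in H. rewrite !mult_INR in H.
  set (x := INR (ndiv n)) in *.
  assert (x0 : 0 < x) by (apply INR_pos; auto).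
  assert (K0 : 0 < INR KD) by (apply INR_pos; apply KD_pos).
  assert (n0 : 0 < INR n) by (apply INR_pos; auto).
  apply ln_le_aux in H; [|repeat apply Rmult_lt_0_compat; auto].
  rewrite !ln_mult in H by (repeat apply Rmult_lt_0_compat; auto).
  lra.
Qed.

Lemma term_bound n1 n2 n3 n4 s m1 m2 m3 :
  (0 < s)%nat -> (0 < m1)%nat -> (0 < m2)%nat -> (0 < m3)%nat -> (0 < n4)%nat ->
  n1 = (s * (m1 * m1))%nat -> n2 = (s * (m2 * m2))%nat -> n3 = (s * (m3 * m3))%nat ->
  c1_term n1 n2 n3 n4 <= Rpower (INR KD) (1/2) * (hh s * hh m1 * hh m2 * hh m3).
Proof.
  intros s0 p1 p2 p3 p4 e1 e2 e3.
  assert (RHS0 : 0 <= Rpower (INR KD) (1/2) * (hh s * hh m1 * hh m2 * hh m3)).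
  { pose proof (hh_pos s); pose proof (hh_pos m1); pose proof (hh_pos m2); pose proof (hh_pos m3).
    pose proof (Rpower_pos (INR KD) (1/2)).
    apply Rmult_le_pos; [lra|]. repeat apply Rmult_le_pos; auto. }
  unfold c1_term. destruct Req_EM_T as [E|E]; [|exact RHS0].
  assert (q1 : (0 < n1)%nat) by (subst; nia).
  assert (q2 : (0 < n2)%nat) by (subst; nia).
  assert (q3 : (0 < n3)%nat) by (subst; nia).
  destruct (Nat.eq_dec (ndiv n1 * ndiv n2 * ndiv n3 * ndiv n4) 0) as [Z0|Z0].
  { rewrite Z0. simpl INR. unfold Rdiv. rewrite Rmult_0_l. exact RHS0. }
  assert (d1 : (0 < ndiv n1)%nat) by nia.
  assert (d2 : (0 < ndiv n2)%nat) by nia.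
  assert (d3 : (0 < ndiv n3)%nat) by nia.
  assert (d4 : (0 < ndiv n4)%nat) by nia.
  pose proof (ndiv_ln n1 q1 d1). pose proof (ndiv_ln n2 q2 d2).
  pose proof (ndiv_ln n3 q3 d3). pose proof (ndiv_ln n4 p4 d4).
  assert (Lnum : INR (ndiv n1 * ndiv n2 * ndiv n3 * ndiv n4) =
     exp (ln (INR (ndiv n1)) + ln (INR (ndiv n2)) + ln (INR (ndiv n3)) + ln (INR (ndiv n4)))).
  { rewrite <- !ln_mult_nat by nia. rewrite exp_ln; auto. apply INR_pos; nia. }
  rewrite Lnum. unfold hh, Rdiv, Rpower.
  rewrite Rinv_mult, <- !exp_Ropp, <- !exp_plus.
  rewrite (ln_mult_nat (n1 * n2) n3) by nia.
  rewrite (ln_mult_nat n1 n2) by nia.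
  assert (L1 : ln (INR n1) = ln (INR s) + 2 * ln (INR m1)).
  { rewrite e1, ln_mult_nat, ln_mult_nat by nia. ring. }
  assert (L2 : ln (INR n2) = ln (INR s) + 2 * ln (INR m2)).
  { rewrite e2, ln_mult_nat, ln_mult_nat by nia. ring. }
  assert (L3 : ln (INR n3) = ln (INR s) + 2 * ln (INR m3)).
  { rewrite e3, ln_mult_nat, ln_mult_nat by nia. ring. }
  pose proof (ln_nat_nonneg s s0). pose proof (ln_nat_nonneg n4 p4).
  apply exp_le_aux. lra.
Qed.

Definition RelT (t : ((nat * nat) * nat) * nat) (b : ((nat * nat) * nat) * nat) : Prop :=
  fst (fst (fst t)) = (fst (fst (fst b)) * (snd (fst (fst b)) * snd (fst (fst b))))%nat /\
  snd (fst (fst t)) = (fst (fst (fst b)) * (snd (fst b) * snd (fst b)))%nat /\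
  snd (fst t) = (fst (fst (fst b)) * (snd b * snd b))%nat /\
  sqrt (INR (fst (fst (fst t)))) + sqrt (INR (snd (fst (fst t)))) + sqrt (INR (snd (fst t)))
    = sqrt (INR (snd t)).

Lemma sum4 (L : list nat) (T : nat -> nat -> nat -> nat -> R) :
  gsum L (fun a => gsum L (fun b => gsum L (fun c => gsum L (fun d => T a b c d)))) =
  gsum (list_prod (list_prod (list_prod L L) L) L)
    (fun t => T (fst (fst (fst t))) (snd (fst (fst t))) (snd (fst t)) (snd t)).
Proof.
  assert (H1 := gsum_prod L L (fun a b => gsum L (fun c => gsum L (fun d => T a b c d)))).
  cbv beta in H1; rewrite H1.
  assert (H2 := gsum_prod (list_prod L L) L (fun p c => gsum L (fun d => T (fst p) (snd p) c d))).
  cbv beta in H2; rewrite H2.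
  assert (H3 := gsum_prod (list_prod (list_prod L L) L) L
     (fun q d => T (fst (fst q)) (snd (fst q)) (snd q) d)).
  cbv beta in H3; rewrite H3. reflexivity.
Qed.

Lemma eqT_dec : forall x y : ((nat * nat) * nat) * nat, {x = y} + {x <> y}.
Proof. repeat decide equality. Qed.

Lemma c1_term_nonneg a b c d : 0 <= c1_term a b c d.
Proof.
  unfold c1_term; destruct Req_EM_T; [|lra].
  unfold Rdiv; apply Rmult_le_pos; [apply pos_INR|].
  left; apply Rinv_0_lt_compat; apply Rmult_lt_0_compat; apply Rpower_pos.
Qed.

Lemma main_bound z : c1sum z <= Rpower (INR KD) (1/2) * 625.
Proof.
  set (K0 := Rpower (INR KD) (1/2)).
  assert (K0pos : 0 < K0) by apply Rpower_pos.
  set (N := Z.to_nat (up z)).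
  set (L := upto z).
  assert (HL : forall n, In n L -> (1 <= n <= N)%nat).
  { intros n Hn. unfold L, upto in Hn. apply filter_In in Hn. destruct Hn as [Hn _].
    apply in_seq in Hn. fold N in Hn. lia. }
  assert (NL : NoDup L) by (apply NoDup_filter, seq_NoDup).
  set (S := seq 1 N).
  assert (NS : NoDup S) by apply seq_NoDup.
  unfold c1sum. change rsum with (@gsum nat). fold L.
  rewrite sum4.
  set (g := fun b : ((nat * nat) * nat) * nat =>
        K0 * (hh (fst (fst (fst b))) * hh (snd (fst (fst b))) * hh (snd (fst b)) * hh (snd b))).
  apply Rle_trans with (gsum (list_prod (list_prod (list_prod S S) S) S) g).
  - apply (inj_sum eqT_dec _ _ _ g RelT).
    + repeat apply NoDup_prod; auto.
    + repeat apply NoDup_prod; auto.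
    + intros b. unfold g. pose proof (hh_pos (fst (fst (fst b)))).
      pose proof (hh_pos (snd (fst (fst b)))). pose proof (hh_pos (snd (fst b))).
      pose proof (hh_pos (snd b)). apply Rmult_le_pos; [lra|].
      repeat apply Rmult_le_pos; auto.
    + intros [[[n1 n2] n3] n4] Ht. simpl.
      apply in_prod_iff in Ht; destruct Ht as [Ht H4].
      apply in_prod_iff in Ht; destruct Ht as [Ht H3].
      apply in_prod_iff in Ht; destruct Ht as [H1 H2].
      apply HL in H1; apply HL in H2; apply HL in H3; apply HL in H4.
      destruct (Req_EM_T (sqrt (INR n1) + sqrt (INR n2) + sqrt (INR n3)) (sqrt (INR n4))) as [E|E].
      * right.
        assert (W12 := pair_sq n1 n2 n3 n4 ltac:(lia) ltac:(lia) E).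
        assert (E' : sqrt (INR n1) + sqrt (INR n3) + sqrt (INR n2) = sqrt (INR n4)) by lra.
        assert (W13 := pair_sq n1 n3 n2 n4 ltac:(lia) ltac:(lia) E').
        destruct (NT.common_part n1 n2 n3 ltac:(lia) ltac:(lia) ltac:(lia) W12 W13)
          as [s [m1 [m2 [m3 [e1 [e2 [e3 [s0 [p1 [p2 p3]]]]]]]]]].
        exists (((s, m1), m2), m3). split; [|split].
        -- subst n1 n2 n3.
           assert (m1 <= m1 * m1)%nat by nia.
           assert (m2 <= m2 * m2)%nat by nia.
           assert (m3 <= m3 * m3)%nat by nia.
           assert (Hsx : forall x, (x <= s * x)%nat) by (intros; nia).
           pose proof (Hsx (m1 * m1)%nat). pose proof (Hsx (m2 * m2)%nat). pose proof (Hsx (m3 * m3)%nat).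
           assert (s <= s * (m1 * m1))%nat by nia.
           repeat (apply in_prod_iff; split); apply in_seq; lia.
        -- unfold RelT; simpl; auto.
        -- unfold g; simpl. apply term_bound; auto; lia.
      * left. unfold c1_term. destruct Req_EM_T; [contradiction | lra].
    + intros [[[a1 a2] a3] a4] [[[b1 b2] b3] b4] [[[s m1] m2] m3] _ _ Ra Rb.
      unfold RelT in Ra, Rb; simpl in Ra, Rb.
      destruct Ra as [ea1 [ea2 [ea3 Ea]]]. destruct Rb as [eb1 [eb2 [eb3 Eb]]].
      subst a1 a2 a3 b1 b2 b3.
      assert (INR a4 = INR b4).
      { apply sqrt_inj; try apply pos_INR. rewrite <- Ea, <- Eb. reflexivity. }
      apply INR_eq in H. subst. reflexivity.
  - set (F0 := fun x => K0 * hh x).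
    set (F1 := fun p : nat * nat => F0 (fst p) * hh (snd p)).
    set (F2 := fun q : (nat * nat) * nat => F1 (fst q) * hh (snd q)).
    set (F3 := fun t : ((nat * nat) * nat) * nat => F2 (fst t) * hh (snd t)).
    rewrite (gsum_ext _ g F3) by (intros; unfold g, F3, F2, F1, F0; ring).
    unfold F3. rewrite gsum_mult. unfold F2. rewrite gsum_mult.
    unfold F1. rewrite gsum_mult. unfold F0. rewrite gsum_scal.
    pose proof (hsum N) as Hs. fold S in Hs.
    assert (H0 : 0 <= gsum S hh) by (apply gsum_nonneg; intros; apply hh_pos).
    set (H := gsum S hh) in *.
    assert (H*H <= 25) by nra.
    assert (H*H*H <= 125) by nra.
    assert (H*H*H*H <= 625) by nra.
    nra.
Qed.
End WithK.

Theorem lemma4p2 :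
  exists K : R, 0 < K /\ forall z : R, 10 <= z -> Rabs (c1sum z) <= K * 1.
Proof.
  destruct NT.ndiv_bound_ex as [KD [Kpos Kb]].
  exists (Rpower (INR KD) (1/2) * 625). split.
  - pose proof (Rpower_pos (INR KD) (1/2)); lra.
  - intros z _. rewrite Rmult_1_r.
    rewrite Rabs_right.
    + apply (main_bound KD Kpos Kb).
    + apply Rle_ge. unfold c1sum, rsum.
      repeat (apply gsum_nonneg; intros).
      apply c1_term_nonneg.
Qed.
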